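(* (1) The set of reaction networks that have the capacity for weak reversibility strictly contains the set of weakly reversible reaction networks. (2) The set of reaction networks that have the capacity to be endotactic strictly contains the set of endotactic reaction networks.
   Context: A reaction network (E-graph) $\mathcal{G}=(\mathcal{V},\mathcal{E})$ is a finite directed graph whose nodes are distinct elements of a finite set $Y\subset\mathbb{R}^d_{\ge 0}$, with $\mathcal{V}\neq\emptyset$, every node incident to at least one edge, and no edge from a node to itself. For an edge $e$, $\mathbf{s}(e)$ is its source node, $\mathbf{t}(e)$ its target node, and $\mathbf{v}(e)=\mathbf{t}(e)-\mathbf{s}(e)$ its reaction vector. Given positive rate constants $(k_e)_{e\in\mathcal{E}}$, $\mathcal{G}$ generates the mass-action system $\frac{d\mathbf{x}}{dt}=\sum_{e\in\mathcal{E}}k_e\mathbf{x}^{\mathbf{s}(e)}\mathbf{v}(e)$, where $\mathbf{x}^{\mathbf{y}}=\prod_i x_i^{y_i}$ and $0^0=1$. Two networks $\mathcal{G}_1,\mathcal{G}_2$ have the capacity for dynamical equivalence if there exist positive rate constants for each such that the generated right-hand sides coincide for all $\mathbf{x}$. $\mathcal{G}$ is weakly reversible if every edge lies in a directed cycle. $\mathcal{G}$ is endotactic if for every $\mathbf{w}\in\mathbb{R}^d$ and every $e_i\in\mathcal{E}$ with $\mathbf{w}\cdot\mathbf{v}(e_i)<0$ there exists $e_j\in\mathcal{E}$ with $\mathbf{w}\cdot(\mathbf{s}(e_j)-\mathbf{s}(e_i))<0$ and $\mathbf{w}\cdot\mathbf{v}(e_j)>0$. A network has the capacity for weak reversibility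 (resp. to be endotactic) if it has the capacity for dynamical equivalence with some weakly reversible (resp. endotactic) network. *)

(* Defs.v *)
From mathcomp Require Import all_boot all_order all_algebra.
From mathcomp Require Import all_classical all_reals all_analysis.
Set Implicit Arguments. Unset Strict Implicit. Unset Printing Implicit Defensive.
Import Order.TTheory GRing.Theory Num.Theory.
Local Open Scope ring_scope.

(* A complex / node is a row vector y in R^d; an edge (reaction) is a pair
   (source, target). A reaction network is given by its finite list of
   (distinct) edges; its node set is the set of endpoints of the edges. *)
Definition edge (R : realType) (d : nat) := ('rV[R]_d * 'rV[R]_d)%type.

Definition is_network (R : realType) (d : nat) (E : seq (edge R d)) : Prop :=
  [/\ E != [::], uniq E,
      (forall e, e \in E -> e.1 != e.2) &
      (forall e, e \in E -> forall i, 0 <= e.1 ord0 i /\ 0 <= e.2 ord0 i)].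

(* x^y = prod_i x_i^{y_i}, with powR (0 `^ 0 = 1). *)
Definition monomial (R : realType) (d : nat) (x y : 'rV[R]_d) : R :=
  \prod_(i < d) powR (x ord0 i) (y ord0 i).

Definition mass_action_rhs (R : realType) (d : nat) (E : seq (edge R d))
    (k : edge R d -> R) (x : 'rV[R]_d) : 'rV[R]_d :=
  \sum_(e <- E) (k e * monomial x e.1) *: (e.2 - e.1).

Definition positive_rates (R : realType) (d : nat) (E : seq (edge R d))
    (k : edge R d -> R) : Prop :=
  forall e, e \in E -> 0 < k e.

Definition capacity_dyn_equiv (R : realType) (d : nat)
    (E1 E2 : seq (edge R d)) : Prop :=
  exists k1 k2, positive_rates E1 k1 /\ positive_rates E2 k2 /\
    forall x : 'rV[R]_d, (forall i, 0 <= x ord0 i) ->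
      mass_action_rhs E1 k1 x = mass_action_rhs E2 k2 x.

Inductive reach (R : realType) (d : nat) (E : seq (edge R d))
    : 'rV[R]_d -> 'rV[R]_d -> Prop :=
  | reach_refl a : reach E a a
  | reach_step a b c : (a, b) \in E -> reach E b c -> reach E a c.

(* every edge lies in a directed cycle: its target reaches its source *)
Definition weakly_reversible (R : realType) (d : nat) (E : seq (edge R d)) : Prop :=
  forall e, e \in E -> reach E e.2 e.1.

Definition dotv (R : realType) (d : nat) (u v : 'rV[R]_d) : R :=
  \sum_(i < d) u ord0 i * v ord0 i.

Definition endotactic (R : realType) (d : nat) (E : seq (edge R d)) : Prop :=
  forall (w : 'rV[R]_d) (ei : edge R d), ei \in E ->
    dotv w (ei.2 - ei.1) < 0 ->
    exists ej, ej \in E /\ dotv w (ej.1 - ei.1) < 0 /\ 0 < dotv w (ej.2 - ej.1).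

Definition capacity_WR (R : realType) (d : nat) (E : seq (edge R d)) : Prop :=
  exists E', is_network E' /\ weakly_reversible E' /\ capacity_dyn_equiv E E'.

Definition capacity_endotactic (R : realType) (d : nat) (E : seq (edge R d)) : Prop :=
  exists E', is_network E' /\ endotactic E' /\ capacity_dyn_equiv E E'.

(* Main.v *)
Require Import Defs.
From mathcomp Require Import all_boot all_order all_algebra.
From mathcomp Require Import all_classical all_reals all_analysis.
From mathcomp Require Import ring lra.
Set Implicit Arguments. Unset Strict Implicit. Unset Printing Implicit Defensive.
Import Order.TTheory GRing.Theory Num.Theory.
Local Open Scope ring_scope.

Section Aux.
Variable R : realType.
Definition vv (c : R) : 'rV[R]_1 := const_mx c.

Lemma vvE c i j : vv c i j = c. Proof. by rewrite /vv mxE. Qed.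

Lemma vv_eq a b : (vv a == vv b) = (a == b).
Proof.
apply/eqP/eqP => [h|->] //.
by have := congr1 (fun M : 'rV[R]_1 => M ord0 ord0) h; rewrite ?vvE.
Qed.

Lemma rne (a b : R) : a != b -> (a == b) = false. Proof. by move/negPf. Qed.
Definition rfacts := (@rne 0 1 ltac:(apply/eqP; lra), @rne 1 0 ltac:(apply/eqP; lra),
  @rne 0 2 ltac:(apply/eqP; lra), @rne 2 0 ltac:(apply/eqP; lra),
  @rne 1 2 ltac:(apply/eqP; lra), @rne 2 1 ltac:(apply/eqP; lra)).

Definition Ebad : seq (edge R 1) := [:: (vv 1, vv 0); (vv 1, vv 2); (vv 0, vv 1)].
Definition Egood : seq (edge R 1) := [:: (vv 0, vv 1); (vv 1, vv 0)].

Lemma dotv1 (u w : 'rV[R]_1) : dotv u w = u ord0 ord0 * w ord0 ord0.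
Proof. by rewrite /dotv big_ord1. Qed.

Lemma net_bad : is_network Ebad.
Proof.
split => //.
- rewrite /Ebad /= !inE !xpair_eqE !vv_eq.
  by rewrite !rfacts !eqxx.
- move=> e; rewrite !inE => /or3P [] /eqP -> /=; by rewrite vv_eq rfacts.
- move=> e; rewrite !inE => /or3P [] /eqP -> i /=; rewrite ?vvE; lra.
Qed.

Lemma net_good : is_network Egood.
Proof.
split => //.
- rewrite /Egood /= !inE !xpair_eqE !vv_eq andbT.
  by rewrite !rfacts.
- move=> e; rewrite !inE => /orP [] /eqP -> /=; by rewrite vv_eq rfacts.
- move=> e; rewrite !inE => /orP [] /eqP -> i /=; rewrite ?vvE; lra.
Qed.

Lemma equiv_bad_good : capacity_dyn_equiv Ebad Egood.
Proof.
exists (fun e => if e == (vv 1, vv 0) then 2 else 1), (fun _ => 1).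
split; [|split].
- move=> e _; case: ifP => _; lra.
- move=> e _; lra.
- move=> x _; rewrite /mass_action_rhs /Ebad /Egood !big_cons big_nil /=.
  rewrite !eqxx /= !xpair_eqE !vv_eq.
  have h10 : ((1:R) == 0) = false by apply/eqP; lra.
  have h21 : ((2:R) == 1) = false by apply/eqP; lra.
  have h01 : ((0:R) == 1) = false by apply/eqP; lra.
  rewrite ?rfacts ?andbF /=.
  apply/rowP => i; rewrite !mxE ?vvE big_nil mxE.
  set a := monomial x (vv 1); set b := monomial x (vv 0).
  ring.
Qed.

Lemma reach_bad c : reach Ebad (vv 2) c -> c = vv 2.
Proof.
move=> h; inversion h => //.
by move: H; rewrite !inE !xpair_eqE !vv_eq !rfacts.
Qed.

Lemma not_wr_bad : ~ weakly_reversible Ebad.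
Proof.
move=> h; have := h (vv 1, vv 2); rewrite !inE eqxx orbT => /(_ isT) /= /reach_bad.
move/eqP; rewrite vv_eq => /eqP; lra.
Qed.

Lemma wr_good : weakly_reversible Egood.
Proof.
move=> e; rewrite !inE => /orP [] /eqP -> /=;
  (eapply reach_step; last exact: reach_refl); rewrite !inE eqxx ?orbT //.
Qed.

Lemma endo_good : endotactic Egood.
Proof.
move=> w ei; rewrite !inE => /orP [] /eqP -> /=; rewrite dotv1 !mxE => hw.
- exists (vv 1, vv 0); rewrite !inE eqxx orbT; split => //=.
  rewrite !dotv1 !mxE ?vvE; split; lra.
- exists (vv 0, vv 1); rewrite !inE eqxx; split => //=.
  rewrite !dotv1 !mxE ?vvE; split; lra.
Qed.

Lemma not_endo_bad : ~ endotactic Ebad.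
Proof.
move=> h; have := h (vv (-1)) (vv 1, vv 2).
rewrite !inE eqxx orbT /= dotv1 !mxE ?vvE => /(_ isT).
case; first lra.
move=> ej []; rewrite !inE => /or3P [] /eqP -> /=; rewrite !dotv1 !mxE ?vvE; lra.
Qed.

End Aux.

Theorem theorem1 (R : realType) :
  ((forall (d : nat) (E : seq (edge R d)),
       is_network E -> weakly_reversible E -> capacity_WR E) /\
   (exists (d : nat) (E : seq (edge R d)),
       is_network E /\ capacity_WR E /\ ~ weakly_reversible E)) /\
  ((forall (d : nat) (E : seq (edge R d)),
       is_network E -> endotactic E -> capacity_endotactic E) /\
   (exists (d : nat) (E : seq (edge R d)),
       is_network E /\ capacity_endotactic E /\ ~ endotactic E)).
Proof.
have refl d (E : seq (edge R d)) : capacity_dyn_equiv E E.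
  by exists (fun _ => 1), (fun _ => 1); split; [|split] => // e _; lra.
split; split.
- by move=> d E hn hw; exists E.
- exists 1%N, (Ebad R); split; first exact: net_bad.
  split; last exact: not_wr_bad.
  exists (Egood R); split; first exact: net_good.
  split; [exact: wr_good | exact: equiv_bad_good].
- by move=> d E hn hw; exists E.
- exists 1%N, (Ebad R); split; first exact: net_bad.
  split; last exact: not_endo_bad.
  exists (Egood R); split; first exact: net_good.
  split; [exact: endo_good | exact: equiv_bad_good].
Qed.
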